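(* Let $0<t_0\le1/2$, $t\in[t_0,1]$. There exist nonnegative integers $c^{k,j}_{\ell,p,q}$ ($k,j,\ell,p,q\in\mathbb Z_+$), with $c^{0,0}_{0,0,0}=1$, determined by the recursion $$c^{k+1,j}_{\ell,p,q}=c^{k,j-2}_{\ell,p-1,q}+c^{k,j}_{\ell,p,q-1}+2c^{k,j-1}_{\ell-1,p,q}$$ under the convention that $c^{k,j}_{\ell,p,q}=0$ if $j>2k$ or any entry of $(j,\ell,p,q)$ is negative, such that for every $k\in\mathbb Z_+$ and all sufficiently smooth functions $g,h$ on $\mathbb T^3\times\mathbb R^3$, $$M^k(gh)=\sum_{j=0}^{2k}A_{j,2k-j}(g,h),\qquad A_{j,2k-j}(g,h)=\sum_{\ell+2p=j,\ \ell+2q=2k-j}c^{k,j}_{\ell,p,q}\,(\Lambda^\ell M^pg)\cdot(\Lambda^\ell M^qh),$$ the inner sum being over all nonnegative integers $\ell,p,q$ with $\ell+2p=j$ and $\ell+2q=2k-j$. Moreover $$\sum_{\ell+2p=j,\ \ell+2q=2k-j}c^{k,j}_{\ell,p,q}=\binom{2k}{j}.$$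
   Context: $M=-(t-t_0)\partial_{v_1}^2-(t-t_0)^2\partial_{x_1}\partial_{v_1}-\frac{(t-t_0)^3}{3}\partial_{x_1}^2$ acting on functions of $(x,v)\in\mathbb T^3\times\mathbb R^3$. With $\sqrt{-1}$ the imaginary unit, $\Lambda_1=\frac{1}{2\sqrt{-1}}\big((t-t_0)^{1/2}\partial_{v_1}+(t-t_0)^{3/2}\partial_{x_1}\big)$ and $\Lambda_2=\frac{\sqrt3}{6\sqrt{-1}}\big(3(t-t_0)^{1/2}\partial_{v_1}+(t-t_0)^{3/2}\partial_{x_1}\big)$, so that $M=\Lambda_1^2+\Lambda_2^2$. For $\ell\in\mathbb Z_+$, $\Lambda^\ell g\cdot\Lambda^\ell h:=\sum_{j_1=1}^2\cdots\sum_{j_\ell=1}^2(\Lambda_{j_1}\cdots\Lambda_{j_\ell}g)(\Lambda_{j_1}\cdots\Lambda_{j_\ell}h)$ (equal to $gh$ when $\ell=0$). *)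

(* Defs.v *)
From Stdlib Require Import Reals List.
From Coquelicot Require Import Coquelicot.
Open Scope R_scope.

(** Points (x,v) with x = (x1,x2,x3), v = (v1,v2,v3).  Functions on
    T^3 x R^3 are represented as functions on R^3 x R^3 that are
    1-periodic in each x_i (see [periodic_x]). *)
Definition state : Type := ((R * R * R) * (R * R * R))%type.

Definition x1_of (z : state) : R := let '((a, _, _), _) := z in a.
Definition v1_of (z : state) : R := let '(_, (b, _, _)) := z in b.
Definition set_x1 (z : state) (s : R) : state :=
  let '((_, a2, a3), v) := z in ((s, a2, a3), v).
Definition set_v1 (z : state) (s : R) : state :=
  let '(x, (_, b2, b3)) := z in (x, (s, b2, b3)).

Definition periodic_x {T : Type} (f : state -> T) : Prop :=
  forall a1 a2 a3 b1 b2 b3 : R,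
    f ((a1 + 1, a2, a3), (b1, b2, b3)) = f ((a1, a2, a3), (b1, b2, b3)) /\
    f ((a1, a2 + 1, a3), (b1, b2, b3)) = f ((a1, a2, a3), (b1, b2, b3)) /\
    f ((a1, a2, a3 + 1), (b1, b2, b3)) = f ((a1, a2, a3), (b1, b2, b3)).

Definition pdx1R (u : state -> R) : state -> R :=
  fun z => Derive (fun s => u (set_x1 z s)) (x1_of z).
Definition pdv1R (u : state -> R) : state -> R :=
  fun z => Derive (fun s => u (set_v1 z s)) (v1_of z).

Fixpoint iterDR (w : list bool) (u : state -> R) : state -> R :=
  match w with
  | nil => u
  | b :: w' => (if b then pdx1R else pdv1R) (iterDR w' u)
  end.

(** "Sufficiently smooth" in the variables (x1,v1) on which all operators act:
    every iterated partial derivative in x1, v1 is differentiable in x1 and in v1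
    and jointly continuous in (x1,v1). *)
Definition smoothR (u : state -> R) : Prop :=
  forall (w : list bool) (z : state),
    ex_derive (fun s => iterDR w u (set_x1 z s)) (x1_of z) /\
    ex_derive (fun s => iterDR w u (set_v1 z s)) (v1_of z) /\
    continuous (fun ab : R * R => iterDR w u (set_x1 (set_v1 z (snd ab)) (fst ab)))
               (x1_of z, v1_of z).

Definition smoothC (f : state -> C) : Prop :=
  smoothR (fun z => Re (f z)) /\ smoothR (fun z => Im (f z)).

Definition pdx1 (f : state -> C) : state -> C :=
  fun z => (pdx1R (fun y => Re (f y)) z, pdx1R (fun y => Im (f y)) z).
Definition pdv1 (f : state -> C) : state -> C :=
  fun z => (pdv1R (fun y => Re (f y)) z, pdv1R (fun y => Im (f y)) z).

Definition cscale (a : C) (f : state -> C) : state -> C := fun z => Cmult a (f z).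
Definition fadd (f g : state -> C) : state -> C := fun z => Cplus (f z) (g z).
Definition fmul (f g : state -> C) : state -> C := fun z => Cmult (f z) (g z).

Definition Mop (t0 t : R) (f : state -> C) : state -> C :=
  fadd (cscale (RtoC (- (t - t0))) (pdv1 (pdv1 f)))
   (fadd (cscale (RtoC (- (t - t0) ^ 2)) (pdx1 (pdv1 f)))
         (cscale (RtoC (- ((t - t0) ^ 3 / 3))) (pdx1 (pdx1 f)))).

Definition Lam1 (t0 t : R) (f : state -> C) : state -> C :=
  cscale (Cinv (Cmult (RtoC 2) Ci))
    (fadd (cscale (RtoC (sqrt (t - t0))) (pdv1 f))
          (cscale (RtoC ((t - t0) * sqrt (t - t0))) (pdx1 f))).

Definition Lam2 (t0 t : R) (f : state -> C) : state -> C :=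
  cscale (Cdiv (RtoC (sqrt 3)) (Cmult (RtoC 6) Ci))
    (fadd (cscale (RtoC (3 * sqrt (t - t0))) (pdv1 f))
          (cscale (RtoC ((t - t0) * sqrt (t - t0))) (pdx1 f))).

Definition LamJ (t0 t : R) (j : nat) : (state -> C) -> state -> C :=
  if Nat.eqb j 1 then Lam1 t0 t else Lam2 t0 t.

Fixpoint words (l : nat) : list (list nat) :=
  match l with
  | O => nil :: nil
  | S l' => flat_map (fun w => (1%nat :: w) :: (2%nat :: w) :: nil) (words l')
  end.

Definition applyLam (t0 t : R) (w : list nat) (f : state -> C) : state -> C :=
  fold_right (fun j acc => LamJ t0 t j acc) f w.

Definition Csum (l : list C) : C := fold_right Cplus (RtoC 0) l.

Definition LamDot (t0 t : R) (l : nat) (g h : state -> C) : state -> C :=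
  fun z => Csum (map (fun w => Cmult (applyLam t0 t w g z) (applyLam t0 t w h z))
                     (words l)).

Fixpoint coef (k j l p q : nat) : nat :=
  match k with
  | O => if (Nat.eqb j 0 && Nat.eqb l 0 && Nat.eqb p 0 && Nat.eqb q 0)%bool
         then 1%nat else 0%nat
  | S k' =>
      if Nat.ltb (2 * k) j then 0%nat else
      ((if (Nat.leb 2 j && Nat.leb 1 p)%bool then coef k' (j - 2) l (p - 1) q else 0)
     + (if Nat.leb 1 q then coef k' j l p (q - 1) else 0)
     + 2 * (if (Nat.leb 1 j && Nat.leb 1 l)%bool then coef k' (j - 1) (l - 1) p q else 0))%nat
  end.

(** Sum over all (l,p,q) in nat^3 with l + 2p = j and l + 2q = 2k - j
    (all such triples satisfy l <= 2k, p <= k, q <= k). *)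
Definition sum_lpq {A : Type} (add : A -> A -> A) (zero : A)
  (k j : nat) (F : nat -> nat -> nat -> A) : A :=
  fold_right add zero
    (flat_map (fun l => flat_map (fun p => flat_map (fun q =>
        if (Nat.eqb (l + 2 * p) j && Nat.eqb (l + 2 * q) (2 * k - j))%bool
        then F l p q :: nil else nil)
      (seq 0 (S k))) (seq 0 (S k))) (seq 0 (S (2 * k)))).

Definition Aterm (t0 t : R) (k j : nat) (g h : state -> C) : state -> C :=
  fun z => sum_lpq Cplus (RtoC 0) k j (fun l p q =>
     Cmult (RtoC (INR (coef k j l p q)))
           (LamDot t0 t l (Nat.iter p (Mop t0 t) g) (Nat.iter q (Mop t0 t) h) z)).

(* Main.v *)
Require Import Defs.
From Stdlib Require Import Reals List.
From Coquelicot Require Import Coquelicot.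
From Stdlib Require Import Lia Lra FunctionalExtensionality.
Open Scope R_scope.

Definition sumN (N : nat) (f : nat -> C) : C := Csum (map f (seq 0 N)).

Lemma Csum_app (l1 l2 : list C) : Csum (l1 ++ l2) = Cplus (Csum l1) (Csum l2).
Proof. induction l1 as [|a l IH]; simpl. ring. rewrite IH. ring. Qed.

Lemma sumN_S_r N f : sumN (S N) f = Cplus (sumN N f) (f N).
Proof. unfold sumN. rewrite seq_S, map_app, Csum_app. simpl. ring. Qed.

Lemma seq_shift' a N : seq (S a) N = map S (seq a N).
Proof. revert a; induction N; intros; simpl; [reflexivity| now rewrite IHN]. Qed.

Lemma sumN_S_l N f : sumN (S N) f = Cplus (f 0%nat) (sumN N (fun i => f (S i))).
Proof. unfold sumN. simpl. rewrite seq_shift', map_map. reflexivity. Qed.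

Lemma sumN_0 f : sumN 0 f = RtoC 0.
Proof. reflexivity. Qed.

Lemma sumN_ext N f g : (forall i, (i < N)%nat -> f i = g i) -> sumN N f = sumN N g.
Proof.
  induction N; intros H. reflexivity.
  rewrite !sumN_S_r, IHN, H; auto.
Qed.

Lemma sumN_plus N f g : sumN N (fun i => Cplus (f i) (g i)) = Cplus (sumN N f) (sumN N g).
Proof. induction N. simpl. unfold sumN; simpl; ring. rewrite !sumN_S_r, IHN. ring. Qed.

Lemma sumN_scal N c f : sumN N (fun i => Cmult c (f i)) = Cmult c (sumN N f).
Proof. induction N. unfold sumN; simpl; ring. rewrite !sumN_S_r, IHN. ring. Qed.

Lemma sumN_zero N f : (forall i, (i < N)%nat -> f i = RtoC 0) -> sumN N f = RtoC 0.
Proof. intros H. induction N. reflexivity. rewrite sumN_S_r, IHN, H; auto. ring. Qed.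

Lemma sumN_extend N N' f : (N <= N')%nat -> (forall i, (N <= i)%nat -> (i < N')%nat -> f i = RtoC 0) ->
  sumN N' f = sumN N f.
Proof.
  intros HN H. induction HN. reflexivity.
  rewrite sumN_S_r, IHHN, H; try lia. ring. intros; apply H; lia.
Qed.

Lemma sumN_swap N M (f : nat -> nat -> C) :
  sumN N (fun i => sumN M (fun j => f i j)) = sumN M (fun j => sumN N (fun i => f i j)).
Proof.
  induction N. rewrite sumN_0. symmetry. apply sumN_zero. reflexivity.
  rewrite sumN_S_r, IHN, <- sumN_plus. apply sumN_ext. intros. rewrite sumN_S_r. reflexivity.
Qed.

Lemma sumN_single N j0 (f : nat -> C) : (j0 < N)%nat ->
  (forall i, i <> j0 -> f i = RtoC 0) -> sumN N f = f j0.
Proof.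
  intros Hj H. induction N. lia.
  rewrite sumN_S_r. destruct (Nat.eq_dec j0 N).
  - subst. rewrite sumN_zero. ring. intros; apply H; lia.
  - rewrite IHN by lia. rewrite (H N) by lia. ring.
Qed.

Lemma sumN_shift M (G H : nat -> C) : G 0%nat = RtoC 0 -> (forall i, G (S i) = H i) -> H M = RtoC 0 ->
  sumN (S M) G = sumN (S M) H.
Proof.
  intros H0 HS HM. rewrite sumN_S_l, H0, sumN_S_r, HM.
  rewrite (sumN_ext M _ H) by (intros; apply HS). ring.
Qed.

Definition tsum N (F : nat -> nat -> nat -> C) : C :=
  sumN N (fun l => sumN N (fun p => sumN N (fun q => F l p q))).

Lemma tsum_plus N F G : tsum N (fun l p q => Cplus (F l p q) (G l p q)) = Cplus (tsum N F) (tsum N G).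
Proof.
  unfold tsum. rewrite <- sumN_plus. apply sumN_ext; intros.
  rewrite <- sumN_plus. apply sumN_ext; intros. apply sumN_plus.
Qed.

Lemma tsum_scal N c F : tsum N (fun l p q => Cmult c (F l p q)) = Cmult c (tsum N F).
Proof.
  unfold tsum. rewrite <- sumN_scal. apply sumN_ext; intros.
  rewrite <- sumN_scal. apply sumN_ext; intros. apply sumN_scal.
Qed.

Lemma tsum_ext N F G : (forall l p q, (l < N)%nat -> (p < N)%nat -> (q < N)%nat -> F l p q = G l p q) ->
  tsum N F = tsum N G.
Proof.
  intros H. unfold tsum. apply sumN_ext; intros. apply sumN_ext; intros. apply sumN_ext; intros. auto.
Qed.

Lemma coef_support k : forall j l p q, coef k j l p q <> 0%nat ->
  (l + 2 * p = j /\ l + 2 * q + j = 2 * k)%nat.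
Proof.
  induction k; intros j l p q H.
  - simpl in H. destruct j, l, p, q; simpl in H; try congruence; lia.
  - revert H. cbn [coef]. destruct (_ <? j) eqn:Hj. congruence. apply Nat.ltb_ge in Hj. intro H.
    destruct (Nat.leb_spec 2 j), (Nat.leb_spec 1 p), (Nat.leb_spec 1 q), (Nat.leb_spec 1 j), (Nat.leb_spec 1 l);
      simpl in H;
    repeat match goal with
    | H : context [coef k ?a ?b ?c ?d] |- _ =>
        let E := fresh in let x := fresh "x" in
        pose proof (IHk a b c d) as E; set (x := coef k a b c d) in *; clearbody x;
        destruct (Nat.eq_dec x 0); [| specialize (E ltac:(assumption))]
    end; lia.
Qed.

Lemma coef_rec k l p q :
  coef (S k) (l + 2 * p) l p q =
  ((match p with O => O | S p' => coef k (l + 2 * p') l p' q end)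
   + (match q with O => O | S q' => coef k (l + 2 * p) l p q' end)
   + 2 * (match l with O => O | S l' => coef k (l' + 2 * p) l' p q end))%nat.
Proof.
  change (coef (S k) (l + 2 * p) l p q) with
    (if Nat.ltb (2 * S k) (l + 2 * p) then 0%nat else
      ((if (Nat.leb 2 (l + 2 * p) && Nat.leb 1 p)%bool then coef k (l + 2 * p - 2) l (p - 1) q else 0)
     + (if Nat.leb 1 q then coef k (l + 2 * p) l p (q - 1) else 0)
     + 2 * (if (Nat.leb 1 (l + 2 * p) && Nat.leb 1 l)%bool then coef k (l + 2 * p - 1) (l - 1) p q else 0))%nat).
  destruct (Nat.ltb_spec (2 * S k) (l + 2 * p)) as [Hj|Hj].
  - assert (Z : forall j l p q, (2 * k < j)%nat -> coef k j l p q = 0%nat).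
    { intros j0 l0 p0 q0 Hl. destruct (Nat.eq_dec (coef k j0 l0 p0 q0) 0); auto.
      apply coef_support in n. lia. }
    destruct p, q, l; rewrite ?Z; lia.
  - f_equal; [f_equal|f_equal].
    + destruct p as [|p].
      * destruct (Nat.leb 2 (l + 2 * 0)); reflexivity.
      * replace (Nat.leb 2 (l + 2 * S p)) with true by (symmetry; apply Nat.leb_le; lia).
        simpl. f_equal; lia.
    + destruct q; simpl; [reflexivity| f_equal; lia].
    + destruct l as [|l].
      * destruct (Nat.leb 1 (0 + 2 * p)); reflexivity.
      * replace (Nat.leb 1 (S l + 2 * p)) with true by (symmetry; apply Nat.leb_le; lia).
        simpl. f_equal; lia.
Qed.

Definition T (k l p q : nat) : C := RtoC (INR (coef k (l + 2 * p) l p q)).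

Lemma T_zero k l p q : (l + p + q <> k)%nat -> T k l p q = RtoC 0.
Proof.
  intros H. unfold T. destruct (Nat.eq_dec (coef k (l + 2 * p) l p q) 0) as [E|E].
  rewrite E. reflexivity. apply coef_support in E. lia.
Qed.

Lemma RtoC_INR_plus a b : RtoC (INR (a + b)) = Cplus (RtoC (INR a)) (RtoC (INR b)).
Proof. rewrite plus_INR. unfold RtoC, Cplus. simpl. f_equal. ring. Qed.

Lemma T_rec k l p q : T (S k) l p q =
  Cplus (Cplus (match p with O => RtoC 0 | S p' => T k l p' q end)
               (match q with O => RtoC 0 | S q' => T k l p q' end))
        (Cplus (match l with O => RtoC 0 | S l' => T k l' p q end)
               (match l with O => RtoC 0 | S l' => T k l' p q end)).
Proof.
  unfold T at 1. rewrite coef_rec.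
  replace (2 * match l with 0 => 0 | S l' => coef k (l' + 2 * p) l' p q end)%nat with
    ((match l with 0 => 0 | S l' => coef k (l' + 2 * p) l' p q end) + (match l with 0 => 0 | S l' => coef k (l' + 2 * p) l' p q end))%nat by lia.
  rewrite !RtoC_INR_plus. destruct p, q, l; reflexivity.
Qed.

Lemma tsum_shift_p k M X : (k < M)%nat ->
  tsum (S M) (fun l p q => Cmult (match p with O => RtoC 0 | S p' => T k l p' q end) (X l p q)) =
  tsum (S M) (fun l p q => Cmult (T k l p q) (X l (S p) q)).
Proof.
  intros HM. unfold tsum. apply sumN_ext. intros l _.
  apply sumN_shift.
  - apply sumN_zero. intros. ring.
  - intros. reflexivity.
  - apply sumN_zero. intros. rewrite T_zero by lia. ring.
Qed.

Lemma tsum_shift_q k M X : (k < M)%nat ->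
  tsum (S M) (fun l p q => Cmult (match q with O => RtoC 0 | S q' => T k l p q' end) (X l p q)) =
  tsum (S M) (fun l p q => Cmult (T k l p q) (X l p (S q))).
Proof.
  intros HM. unfold tsum. apply sumN_ext. intros l _. apply sumN_ext. intros p _.
  apply sumN_shift.
  - cbv beta. ring.
  - intros. reflexivity.
  - cbv beta. rewrite T_zero by lia. ring.
Qed.

Lemma tsum_shift_l k M X : (k < M)%nat ->
  tsum (S M) (fun l p q => Cmult (match l with O => RtoC 0 | S l' => T k l' p q end) (X l p q)) =
  tsum (S M) (fun l p q => Cmult (T k l p q) (X (S l) p q)).
Proof.
  intros HM. unfold tsum.
  apply sumN_shift.
  - apply sumN_zero. intros. apply sumN_zero. intros. ring.
  - intros. reflexivity.
  - apply sumN_zero. intros. apply sumN_zero. intros. rewrite T_zero by lia. ring.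
Qed.

Lemma tsum_step k N X : (k + 2 <= N)%nat ->
  tsum N (fun l p q => Cmult (T (S k) l p q) (X l p q)) =
  tsum N (fun l p q => Cmult (T k l p q)
     (Cplus (Cplus (X l (S p) q) (X l p (S q))) (Cplus (X (S l) p q) (X (S l) p q)))).
Proof.
  intros HN. destruct N as [|M]. lia.
  rewrite (tsum_ext _ _ (fun l p q =>
     Cplus (Cplus (Cmult (match p with O => RtoC 0 | S p' => T k l p' q end) (X l p q))
                  (Cmult (match q with O => RtoC 0 | S q' => T k l p q' end) (X l p q)))
           (Cplus (Cmult (match l with O => RtoC 0 | S l' => T k l' p q end) (X l p q))
                  (Cmult (match l with O => RtoC 0 | S l' => T k l' p q end) (X l p q))))).
  2:{ intros. rewrite T_rec. ring. }
  rewrite !tsum_plus, tsum_shift_p, tsum_shift_q, tsum_shift_l by lia.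
  rewrite (tsum_ext _ (fun l p q => Cmult (T k l p q)
     (Cplus (Cplus (X l (S p) q) (X l p (S q))) (Cplus (X (S l) p q) (X (S l) p q)))) (fun l p q =>
     Cplus (Cplus (Cmult (T k l p q) (X l (S p) q)) (Cmult (T k l p q) (X l p (S q))))
           (Cplus (Cmult (T k l p q) (X (S l) p q)) (Cmult (T k l p q) (X (S l) p q))))).
  2:{ intros. ring. }
  rewrite !tsum_plus. reflexivity.
Qed.



Lemma tsum3_extend N Nl Np Nq F : (Nl <= N)%nat -> (Np <= N)%nat -> (Nq <= N)%nat ->
  (forall l p q, (l < N)%nat -> (p < N)%nat -> (q < N)%nat -> (Nl <= l \/ Np <= p \/ Nq <= q)%nat -> F l p q = RtoC 0) ->
  tsum N F = sumN Nl (fun l => sumN Np (fun p => sumN Nq (fun q => F l p q))).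
Proof.
  intros Hl Hp Hq H. unfold tsum.
  rewrite (sumN_ext N _ (fun l => sumN N (fun p => sumN Nq (fun q => F l p q)))).
  2:{ intros l Hl'. apply sumN_ext. intros p Hp'. apply sumN_extend; [assumption|].
      intros q Hq1 Hq2. apply H; lia. }
  rewrite (sumN_ext N _ (fun l => sumN Np (fun p => sumN Nq (fun q => F l p q)))).
  2:{ intros l Hl'. apply sumN_extend; [assumption|].
      intros p Hp1 Hp2. apply sumN_zero. intros q Hq'. apply H; lia. }
  apply sumN_extend; [assumption|]. intros l Hl1 Hl2. apply sumN_zero. intros p Hp'.
  apply sumN_zero. intros q Hq'. apply H; lia.
Qed.

Lemma tsum_T_extend k N X : (S k <= N)%nat ->
  tsum N (fun l p q => Cmult (T k l p q) (X l p q)) = tsum (S k) (fun l p q => Cmult (T k l p q) (X l p q)).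
Proof.
  intros HN. rewrite (tsum3_extend N (S k) (S k) (S k)); auto.
  intros l p q _ _ _ Hc. rewrite T_zero by lia. ring.
Qed.

Definition ind (j l p : nat) : C := if Nat.eqb (l + 2 * p) j then RtoC 1 else RtoC 0.
Definition Bk (k j : nat) : C := tsum (S k) (fun l p q => Cmult (T k l p q) (ind j l p)).

Fixpoint bin (n m : nat) : nat :=
  match n, m with
  | _, O => 1%nat
  | O, S _ => 0%nat
  | S n', S m' => (bin n' m' + bin n' (S m'))%nat
  end.

Lemma Bk_0 j : Bk 0 j = RtoC (INR (bin 0 j)).
Proof.
  unfold Bk, tsum. rewrite !sumN_S_r, !sumN_0. unfold T, ind. simpl.
  destruct j; simpl; unfold RtoC, Cplus, Cmult; simpl; f_equal; ring.
Qed.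

Lemma tsum_T0 N (F : nat -> nat -> nat -> C) : tsum N (fun l p q => Cmult (F l p q) (RtoC 0)) = RtoC 0.
Proof. unfold tsum. apply sumN_zero; intros. apply sumN_zero; intros. apply sumN_zero; intros. ring. Qed.

Lemma Bk_S k j : Bk (S k) j =
  Cplus (Cplus (match j with S (S j') => Bk k j' | _ => RtoC 0 end) (Bk k j))
        (Cplus (match j with S j' => Bk k j' | _ => RtoC 0 end) (match j with S j' => Bk k j' | _ => RtoC 0 end)).
Proof.
  unfold Bk at 1. rewrite tsum_step by lia.
  rewrite (tsum_ext _ _ (fun l p q => Cplus (Cplus (Cmult (T k l p q) (match j with S (S j') => ind j' l p | _ => RtoC 0 end))
         (Cmult (T k l p q) (ind j l p)))
         (Cplus (Cmult (T k l p q) (match j with S j' => ind j' l p | _ => RtoC 0 end))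
          (Cmult (T k l p q) (match j with S j' => ind j' l p | _ => RtoC 0 end))))).
  2:{ intros l p q _ _ _. unfold ind.
      destruct j as [|[|j]];
      repeat match goal with |- context [Nat.eqb ?a ?b] => destruct (Nat.eqb_spec a b); try (exfalso; lia) end; ring. }
  rewrite !tsum_plus, !(tsum_T_extend k (S (S k))) by lia.
  destruct j as [|[|j]]; rewrite ?tsum_T0; unfold Bk; ring.
Qed.

Lemma bin_gt n m : (n < m)%nat -> bin n m = 0%nat.
Proof.
  revert m; induction n; intros m H; destruct m; simpl; try lia; auto.
  rewrite !IHn by lia. reflexivity.
Qed.

Lemma bin_n_0 n : bin n 0 = 1%nat.
Proof. destruct n; reflexivity. Qed.

Lemma Bk_bin k j : Bk k j = RtoC (INR (bin (2 * k) j)).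
Proof.
  revert j; induction k; intros j. apply Bk_0.
  rewrite Bk_S.
  replace (2 * S k)%nat with (S (S (2 * k))) by lia.
  destruct j as [|[|j]]; repeat rewrite IHk.
  - rewrite !bin_n_0. unfold RtoC, Cplus; simpl; f_equal; ring.
  - change (bin (S (S (2 * k))) 1) with (bin (S (2*k)) 0 + bin (S (2*k)) 1)%nat.
    change (bin (S (2*k)) 1) with (bin (2*k) 0 + bin (2*k) 1)%nat.
    rewrite !bin_n_0.
    rewrite !RtoC_INR_plus. simpl INR. unfold RtoC, Cplus; simpl; f_equal; ring.
  - change (bin (S (S (2 * k))) (S (S j))) with (bin (S (2*k)) (S j) + bin (S (2*k)) (S (S j)))%nat.
    change (bin (S (2*k)) (S j)) with (bin (2*k) j + bin (2*k) (S j))%nat.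
    change (bin (S (2*k)) (S (S j))) with (bin (2*k) (S j) + bin (2*k) (S (S j)))%nat.
    rewrite !RtoC_INR_plus. unfold RtoC, Cplus; simpl; f_equal; ring.
Qed.

Lemma Cn0 n : Binomial.C n 0 = 1.
Proof. unfold Binomial.C. rewrite Nat.sub_0_r. simpl. field. apply INR_fact_neq_0. Qed.
Lemma Cnn n : Binomial.C n n = 1.
Proof. unfold Binomial.C. rewrite Nat.sub_diag. simpl. field. apply INR_fact_neq_0. Qed.

Lemma bin_C n m : (m <= n)%nat -> INR (bin n m) = Binomial.C n m.
Proof.
  revert m; induction n; intros m H.
  - destruct m; [|lia]. simpl. unfold Binomial.C. simpl. field.
  - destruct m. simpl. rewrite Cn0. reflexivity.
    simpl bin. rewrite plus_INR.
    destruct (Nat.eq_dec m n).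
    + subst. rewrite (bin_gt n (S n)) by lia. rewrite IHn by lia. rewrite !Cnn. simpl; ring.
    + rewrite !IHn by lia. apply Binomial.pascal. lia.
Qed.


Lemma fold_app_C (l1 l2 : list C) :
  fold_right Cplus (RtoC 0) (l1 ++ l2) = Cplus (fold_right Cplus (RtoC 0) l1) (fold_right Cplus (RtoC 0) l2).
Proof. induction l1; simpl. ring. rewrite IHl1. ring. Qed.

Lemma fold_flat_map_C {A} (f : A -> list C) L :
  fold_right Cplus (RtoC 0) (flat_map f L) = Csum (map (fun x => fold_right Cplus (RtoC 0) (f x)) L).
Proof. induction L; simpl. reflexivity. rewrite fold_app_C, IHL. reflexivity. Qed.

Lemma Csum_map_ext {A} (f g : A -> C) L : (forall x, In x L -> f x = g x) -> Csum (map f L) = Csum (map g L).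
Proof. intros H. f_equal. apply map_ext_in. auto. Qed.

Definition condj (k j l p q : nat) : bool := (Nat.eqb (l + 2 * p) j && Nat.eqb (l + 2 * q) (2 * k - j))%bool.

Lemma sum_lpq_C k j F : sum_lpq Cplus (RtoC 0) k j F =
  sumN (S (2 * k)) (fun l => sumN (S k) (fun p => sumN (S k) (fun q =>
    if condj k j l p q then F l p q else RtoC 0))).
Proof.
  unfold sum_lpq, sumN. rewrite fold_flat_map_C. apply Csum_map_ext. intros l _.
  rewrite fold_flat_map_C. apply Csum_map_ext. intros p _.
  rewrite fold_flat_map_C. apply Csum_map_ext. intros q _.
  unfold condj. destruct (_ && _)%bool; simpl; ring.
Qed.

Lemma INR_fold_nat (L : list nat) :
  RtoC (INR (fold_right Nat.add 0%nat L)) = fold_right Cplus (RtoC 0) (map (fun n => RtoC (INR n)) L).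
Proof. induction L; simpl. reflexivity. rewrite RtoC_INR_plus, IHL. reflexivity. Qed.

Lemma map_flat_map' {A B D} (g : B -> D) (f : A -> list B) L :
  map g (flat_map f L) = flat_map (fun x => map g (f x)) L.
Proof. induction L; simpl. reflexivity. rewrite map_app, IHL. reflexivity. Qed.

Lemma sum_lpq_nat k j F : RtoC (INR (sum_lpq Nat.add 0%nat k j F)) =
  sum_lpq Cplus (RtoC 0) k j (fun l p q => RtoC (INR (F l p q))).
Proof.
  unfold sum_lpq. rewrite INR_fold_nat. f_equal.
  rewrite map_flat_map'. apply flat_map_ext. intros l.
  rewrite map_flat_map'. apply flat_map_ext. intros p.
  rewrite map_flat_map'. apply flat_map_ext. intros q.
  destruct (_ && _)%bool; reflexivity.
Qed.

Lemma cond_T k j l p q :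
  (if condj k j l p q then RtoC (INR (coef k j l p q)) else RtoC 0) = Cmult (T k l p q) (ind j l p).
Proof.
  unfold condj, ind.
  destruct (Nat.eqb_spec (l + 2 * p) j); destruct (Nat.eqb_spec (l + 2 * q) (2 * k - j)); simpl.
  - subst. unfold T. ring.
  - rewrite T_zero. ring. lia.
  - ring.
  - ring.
Qed.

Lemma binom_part k j : (j <= 2 * k)%nat ->
  INR (sum_lpq Nat.add 0%nat k j (fun l p q => coef k j l p q)) = Binomial.C (2 * k) j.
Proof.
  intros Hj. rewrite <- bin_C by lia.
  cut (RtoC (INR (sum_lpq Nat.add 0%nat k j (fun l p q => coef k j l p q))) = RtoC (INR (bin (2 * k) j))).
  { intros H. apply (f_equal fst) in H. exact H. }
  rewrite sum_lpq_nat, sum_lpq_C, <- Bk_bin. unfold Bk.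
  rewrite <- (tsum_T_extend k (S (2 * k))) by lia.
  rewrite (tsum3_extend (S (2 * k)) (S (2 * k)) (S k) (S k)) by
    (lia || (intros; rewrite T_zero by lia; ring)).
  apply sumN_ext; intros l _. apply sumN_ext; intros p _. apply sumN_ext; intros q _.
  apply cond_T.
Qed.

Lemma Aterm_conv k (X : nat -> nat -> nat -> C) :
  Csum (map (fun j => sum_lpq Cplus (RtoC 0) k j
     (fun l p q => Cmult (RtoC (INR (coef k j l p q))) (X l p q))) (seq 0 (S (2 * k))))
  = tsum (S k) (fun l p q => Cmult (T k l p q) (X l p q)).
Proof.
  change (Csum (map ?f (seq 0 ?n))) with (sumN n f).
  rewrite (sumN_ext _ _ (fun j => sumN (S (2 * k)) (fun l => sumN (S k) (fun p => sumN (S k) (fun q =>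
    if condj k j l p q then Cmult (RtoC (INR (coef k j l p q))) (X l p q) else RtoC 0))))).
  2:{ intros. apply sum_lpq_C. }
  rewrite sumN_swap.
  rewrite (sumN_ext _ _ (fun l => sumN (S k) (fun p => sumN (S k) (fun q => sumN (S (2 * k)) (fun j =>
    if condj k j l p q then Cmult (RtoC (INR (coef k j l p q))) (X l p q) else RtoC 0))))).
  2:{ intros l _. rewrite sumN_swap. apply sumN_ext. intros p _. apply sumN_swap. }
  rewrite <- (tsum_T_extend k (S (2 * k))) by lia.
  rewrite (tsum3_extend (S (2 * k)) (S (2 * k)) (S k) (S k)) by
    (lia || (intros; rewrite T_zero by lia; ring)).
  apply sumN_ext; intros l Hl. apply sumN_ext; intros p Hp. apply sumN_ext; intros q Hq.
  destruct (Nat.eq_dec (l + p + q) k) as [E|E].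
  - rewrite (sumN_single _ (l + 2 * p)) by
      (lia || (intros i Hi; unfold condj; destruct (Nat.eqb_spec (l + 2 * p) i); [lia|reflexivity])).
    unfold condj. rewrite Nat.eqb_refl.
    replace (Nat.eqb (l + 2 * q) (2 * k - (l + 2 * p))) with true by (symmetry; apply Nat.eqb_eq; lia).
    reflexivity.
  - rewrite T_zero by lia. rewrite sumN_zero. ring.
    intros i Hi. unfold condj.
    destruct (Nat.eqb_spec (l + 2 * p) i); destruct (Nat.eqb_spec (l + 2 * q) (2 * k - i)); simpl;
      try reflexivity. lia.
Qed.

Set Bullet Behavior "Strict Subproofs".


Definition pdR (set : state -> R -> state) (get : state -> R) (u : state -> R) : state -> R :=
  fun z => Derive (fun s => u (set z s)) (get z).
Definition D1 (set : state -> R -> state) (get : state -> R) (u : state -> R) : Prop := forall z, ex_derive (fun s => u (set z s)) (get z).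
Definition pdC set get (f : state -> C) : state -> C :=
  fun z => (pdR set get (fun y => fst (f y)) z, pdR set get (fun y => snd (f y)) z).
Definition D1C (set : state -> R -> state) (get : state -> R) (f : state -> C) : Prop :=
  D1 set get (fun y => fst (f y)) /\ D1 set get (fun y => snd (f y)).

Lemma exd_plus (f g : R -> R) x : ex_derive f x -> ex_derive g x -> ex_derive (fun y => f y + g y) x.
Proof. intros H1 H2. exact (ex_derive_plus f g x H1 H2). Qed.
Lemma exd_minus (f g : R -> R) x : ex_derive f x -> ex_derive g x -> ex_derive (fun y => f y - g y) x.
Proof. intros H1 H2. exact (ex_derive_minus f g x H1 H2). Qed.

Lemma pdC_add set get f g : D1C set get f -> D1C set get g ->
  pdC set get (fadd f g) = fadd (pdC set get f) (pdC set get g).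
Proof.
  intros [Hf1 Hf2] [Hg1 Hg2]. extensionality z. unfold pdC, pdR, fadd, Cplus. simpl.
  f_equal; apply Derive_plus; auto.
Qed.

Lemma pdC_scale set get c f : D1C set get f ->
  pdC set get (cscale c f) = cscale c (pdC set get f).
Proof.
  intros [Hf1 Hf2]. extensionality z. unfold pdC, pdR, cscale, Cmult. simpl.
  f_equal.
  - rewrite Derive_minus, !Derive_scal; auto; apply ex_derive_scal; auto.
  - rewrite Derive_plus, !Derive_scal. ring. all: apply ex_derive_scal; auto.
Qed.

Lemma pdC_mul set get f g : (forall z, set z (get z) = z) -> D1C set get f -> D1C set get g ->
  pdC set get (fmul f g) = fadd (fmul (pdC set get f) g) (fmul f (pdC set get g)).
Proof.
  intros Hsg [Hf1 Hf2] [Hg1 Hg2]. extensionality z. unfold pdC, pdR, fmul, fadd, Cmult, Cplus. simpl.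
  f_equal; rewrite ?Hsg.
  - rewrite Derive_minus, !Derive_mult, !Hsg; auto. ring. all: apply ex_derive_mult; auto.
  - rewrite Derive_plus, !Derive_mult, !Hsg; auto. ring. all: apply ex_derive_mult; auto.
Qed.

Lemma pdC_zero set get : pdC set get (fun _ => RtoC 0) = (fun _ => RtoC 0).
Proof.
  extensionality z. unfold pdC, pdR. simpl. rewrite Derive_const. reflexivity.
Qed.

Lemma D1C_add set get f g : D1C set get f -> D1C set get g -> D1C set get (fadd f g).
Proof.
  intros [Hf1 Hf2] [Hg1 Hg2]. split; intros z; unfold fadd, Cplus; simpl; apply exd_plus; auto.
Qed.

Lemma D1C_scale set get c f : D1C set get f -> D1C set get (cscale c f).
Proof.
  intros [Hf1 Hf2]. split; intros z; unfold cscale, Cmult; simpl.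
  apply exd_minus; apply ex_derive_scal; auto.
  apply exd_plus; apply ex_derive_scal; auto.
Qed.

Lemma D1C_mul set get f g : D1C set get f -> D1C set get g -> D1C set get (fmul f g).
Proof.
  intros [Hf1 Hf2] [Hg1 Hg2]. split; intros z; unfold fmul, Cmult; simpl.
  apply exd_minus; apply ex_derive_mult; auto.
  apply exd_plus; apply ex_derive_mult; auto.
Qed.

Lemma D1C_zero set get : D1C set get (fun _ => RtoC 0).
Proof. split; intros z; simpl; apply ex_derive_const. Qed.


Lemma cont_lin {U : UniformSpace} (f g : U -> R) a b x :
  continuous f x -> continuous g x -> continuous (fun y => a * f y + b * g y) x.
Proof.
  intros Hf Hg.
  exact (continuous_plus (V := R_NormedModule) (fun y => scal a (f y)) (fun y => scal b (g y)) x
     (continuous_scal_r (K := R_AbsRing) (V := R_NormedModule) a f x Hf)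
     (continuous_scal_r (K := R_AbsRing) (V := R_NormedModule) b g x Hg)).
Qed.

Lemma iterDR_snoc w b u : iterDR (w ++ b :: nil) u = iterDR w ((if b then pdx1R else pdv1R) u).
Proof. induction w as [|c w IH]; simpl. reflexivity. rewrite IH. reflexivity. Qed.

Lemma smoothR_pdx u : smoothR u -> smoothR (pdx1R u).
Proof. intros H w z. rewrite <- (iterDR_snoc w true). apply H. Qed.
Lemma smoothR_pdv u : smoothR u -> smoothR (pdv1R u).
Proof. intros H w z. rewrite <- (iterDR_snoc w false). apply H. Qed.

Lemma iterDR_lin a b u v : smoothR u -> smoothR v -> forall w,
  iterDR w (fun z => a * u z + b * v z) = fun z => a * iterDR w u z + b * iterDR w v z.
Proof.
  intros Hu Hv w. induction w as [|c w IH]; simpl. reflexivity.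
  rewrite IH. extensionality z. destruct c; unfold pdx1R, pdv1R.
  - rewrite Derive_plus, !Derive_scal. reflexivity.
    apply ex_derive_scal, Hu. apply ex_derive_scal, Hv.
  - rewrite Derive_plus, !Derive_scal. reflexivity.
    apply ex_derive_scal, Hu. apply ex_derive_scal, Hv.
Qed.

Lemma smoothR_lin a b u v : smoothR u -> smoothR v -> smoothR (fun z => a * u z + b * v z).
Proof.
  intros Hu Hv w z. rewrite (iterDR_lin a b u v Hu Hv w).
  destruct (Hu w z) as [Hu1 [Hu2 Hu3]]. destruct (Hv w z) as [Hv1 [Hv2 Hv3]].
  split; [|split].
  - apply exd_plus; apply ex_derive_scal; assumption.
  - apply exd_plus; apply ex_derive_scal; assumption.
  - apply (cont_lin (fun ab => iterDR w u (set_x1 (set_v1 z (snd ab)) (fst ab)))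
                    (fun ab => iterDR w v (set_x1 (set_v1 z (snd ab)) (fst ab)))); assumption.
Qed.

Lemma smoothR_ext u v : smoothR u -> (forall z, u z = v z) -> smoothR v.
Proof. intros H E. replace v with u. exact H. extensionality z. apply E. Qed.

Definition Sm (f : state -> C) := smoothC f.

Lemma S_add f g : Sm f -> Sm g -> Sm (fadd f g).
Proof.
  intros [Hf1 Hf2] [Hg1 Hg2]. split.
  - apply (smoothR_ext (fun z => 1 * Re (f z) + 1 * Re (g z))).
    apply smoothR_lin; assumption. intros z. unfold fadd, Cplus, Re. simpl. ring.
  - apply (smoothR_ext (fun z => 1 * Im (f z) + 1 * Im (g z))).
    apply smoothR_lin; assumption. intros z. unfold fadd, Cplus, Im. simpl. ring.
Qed.

Lemma S_scale c f : Sm f -> Sm (cscale c f).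
Proof.
  intros [Hf1 Hf2]. split.
  - apply (smoothR_ext (fun z => fst c * Re (f z) + (- snd c) * Im (f z))).
    apply smoothR_lin; assumption. intros z. unfold cscale, Cmult, Re, Im. simpl. ring.
  - apply (smoothR_ext (fun z => snd c * Re (f z) + fst c * Im (f z))).
    apply smoothR_lin; assumption. intros z. unfold cscale, Cmult, Re, Im. simpl. ring.
Qed.

Lemma S_pdx f : Sm f -> Sm (pdx1 f).
Proof. intros [H1 H2]. split; apply smoothR_pdx; assumption. Qed.
Lemma S_pdv f : Sm f -> Sm (pdv1 f).
Proof. intros [H1 H2]. split; apply smoothR_pdv; assumption. Qed.

Definition Dx (f : state -> C) := D1C set_x1 x1_of f.
Definition Dv (f : state -> C) := D1C set_v1 v1_of f.

Lemma S_Dx f : Sm f -> Dx f.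
Proof. intros [H1 H2]. split; intros z; apply (H1 nil z) || apply (H2 nil z). Qed.
Lemma S_Dv f : Sm f -> Dv f.
Proof. intros [H1 H2]. split; intros z; apply (H1 nil z) || apply (H2 nil z). Qed.

Lemma pdx1_eq f : pdx1 f = pdC set_x1 x1_of f.
Proof. reflexivity. Qed.
Lemma pdv1_eq f : pdv1 f = pdC set_v1 v1_of f.
Proof. reflexivity. Qed.

Lemma setx_get z : set_x1 z (x1_of z) = z.
Proof. destruct z as [[[a1 a2] a3] [[b1 b2] b3]]. reflexivity. Qed.
Lemma setv_get z : set_v1 z (v1_of z) = z.
Proof. destruct z as [[[a1 a2] a3] [[b1 b2] b3]]. reflexivity. Qed.

Lemma pdx1_add f g : Dx f -> Dx g -> pdx1 (fadd f g) = fadd (pdx1 f) (pdx1 g).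
Proof. apply pdC_add. Qed.
Lemma pdv1_add f g : Dv f -> Dv g -> pdv1 (fadd f g) = fadd (pdv1 f) (pdv1 g).
Proof. apply pdC_add. Qed.
Lemma pdx1_scale c f : Dx f -> pdx1 (cscale c f) = cscale c (pdx1 f).
Proof. apply pdC_scale. Qed.
Lemma pdv1_scale c f : Dv f -> pdv1 (cscale c f) = cscale c (pdv1 f).
Proof. apply pdC_scale. Qed.
Lemma pdx1_mul f g : Dx f -> Dx g -> pdx1 (fmul f g) = fadd (fmul (pdx1 f) g) (fmul f (pdx1 g)).
Proof. apply pdC_mul. apply setx_get. Qed.
Lemma pdv1_mul f g : Dv f -> Dv g -> pdv1 (fmul f g) = fadd (fmul (pdv1 f) g) (fmul f (pdv1 g)).
Proof. apply pdC_mul. apply setv_get. Qed.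
Lemma pdx1_zero : pdx1 (fun _ => RtoC 0) = (fun _ => RtoC 0).
Proof. apply pdC_zero. Qed.
Lemma pdv1_zero : pdv1 (fun _ => RtoC 0) = (fun _ => RtoC 0).
Proof. apply pdC_zero. Qed.

Lemma Dx_add f g : Dx f -> Dx g -> Dx (fadd f g). Proof. apply D1C_add. Qed.
Lemma Dv_add f g : Dv f -> Dv g -> Dv (fadd f g). Proof. apply D1C_add. Qed.
Lemma Dx_scale c f : Dx f -> Dx (cscale c f). Proof. apply D1C_scale. Qed.
Lemma Dv_scale c f : Dv f -> Dv (cscale c f). Proof. apply D1C_scale. Qed.
Lemma Dx_mul f g : Dx f -> Dx g -> Dx (fmul f g). Proof. apply D1C_mul. Qed.
Lemma Dv_mul f g : Dv f -> Dv g -> Dv (fmul f g). Proof. apply D1C_mul. Qed.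
Lemma Dx_zero : Dx (fun _ => RtoC 0). Proof. apply D1C_zero. Qed.
Lemma Dv_zero : Dv (fun _ => RtoC 0). Proof. apply D1C_zero. Qed.

Lemma clairautR u : smoothR u -> pdx1R (pdv1R u) = pdv1R (pdx1R u).
Proof.
  intros H. extensionality z. destruct z as [[[a1 a2] a3] [[b1 b2] b3]].
  set (F := fun a b => u ((a, a2, a3), (b, b2, b3))).
  change (Derive (fun s => Derive (fun r => F s r) b1) a1 = Derive (fun r => Derive (fun s => F s r) a1) b1).
  apply Schwarz.
  - exists (mkposreal 1 Rlt_0_1). intros x y _ _.
    split; [|split; [|split]].
    + exact (proj1 (H nil ((x, a2, a3), (y, b2, b3)))).
    + exact (proj1 (proj2 (H nil ((x, a2, a3), (y, b2, b3))))).
    + exact (proj1 (H (false :: nil) ((x, a2, a3), (y, b2, b3)))).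
    + exact (proj1 (proj2 (H (true :: nil) ((x, a2, a3), (y, b2, b3))))).
  - apply continuity_2d_pt_filterlim.
    exact (proj2 (proj2 (H (true :: false :: nil) ((a1, a2, a3), (b1, b2, b3))))).
  - apply continuity_2d_pt_filterlim.
    exact (proj2 (proj2 (H (false :: true :: nil) ((a1, a2, a3), (b1, b2, b3))))).
Qed.

Lemma clairaut f : Sm f -> pdx1 (pdv1 f) = pdv1 (pdx1 f).
Proof.
  intros [H1 H2]. extensionality z.
  change (pdx1 (pdv1 f) z) with (pdx1R (pdv1R (fun y => Re (f y))) z, pdx1R (pdv1R (fun y => Im (f y))) z).
  change (pdv1 (pdx1 f) z) with (pdv1R (pdx1R (fun y => Re (f y))) z, pdv1R (pdx1R (fun y => Im (f y))) z).
  rewrite !clairautR by assumption. reflexivity.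
Qed.


Create HintDb sm.
Ltac sm := auto 20 with sm.
#[export] Hint Resolve S_add S_scale S_pdx S_pdv S_Dx S_Dv Dx_add Dv_add Dx_scale Dv_scale
  Dx_mul Dv_mul Dx_zero Dv_zero : sm.


Definition FO (k a b : C) (f : state -> C) : state -> C :=
  cscale k (fadd (cscale a (pdv1 f)) (cscale b (pdx1 f))).

Lemma S_FO k a b f : Sm f -> Sm (FO k a b f).
Proof. unfold FO; sm. Qed.
#[export] Hint Resolve S_FO : sm.

Lemma FO_pdv k a b f : Sm f -> pdv1 (FO k a b f) = FO k a b (pdv1 f).
Proof.
  intros Hf. unfold FO.
  rewrite pdv1_scale by sm. rewrite pdv1_add by sm.
  rewrite !pdv1_scale by sm. rewrite <- clairaut by auto. reflexivity.
Qed.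

Lemma FO_pdx k a b f : Sm f -> pdx1 (FO k a b f) = FO k a b (pdx1 f).
Proof.
  intros Hf. unfold FO.
  rewrite pdx1_scale by sm. rewrite pdx1_add by sm.
  rewrite !pdx1_scale by sm. rewrite clairaut by auto. reflexivity.
Qed.

Lemma FO_add k a b u v : Sm u -> Sm v -> FO k a b (fadd u v) = fadd (FO k a b u) (FO k a b v).
Proof.
  intros Hu Hv. unfold FO. rewrite pdv1_add, pdx1_add by sm.
  extensionality z. unfold fadd, cscale. ring.
Qed.

Lemma FO_scale k a b c u : Sm u -> FO k a b (cscale c u) = cscale c (FO k a b u).
Proof.
  intros Hu. unfold FO. rewrite pdv1_scale, pdx1_scale by sm.
  extensionality z. unfold fadd, cscale. ring.
Qed.


Lemma S_Mop t0 t f : Sm f -> Sm (Mop t0 t f).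
Proof. unfold Mop; sm. Qed.
#[export] Hint Resolve S_Mop : sm.

Lemma Mop_FO t0 t k a b f : Sm f -> Mop t0 t (FO k a b f) = FO k a b (Mop t0 t f).
Proof.
  intros Hf. unfold Mop at 1.
  rewrite FO_pdv by sm. rewrite FO_pdv by sm.
  rewrite FO_pdx by sm. rewrite FO_pdx by sm. rewrite FO_pdx by sm.
  unfold Mop. rewrite !FO_add by sm. rewrite !FO_scale by sm. reflexivity.
Qed.

Lemma Lam1_FO t0 t f : Lam1 t0 t f = FO (Cinv (Cmult (RtoC 2) Ci)) (RtoC (sqrt (t - t0)))
   (RtoC ((t - t0) * sqrt (t - t0))) f.
Proof. reflexivity. Qed.
Lemma Lam2_FO t0 t f : Lam2 t0 t f = FO (Cdiv (RtoC (sqrt 3)) (Cmult (RtoC 6) Ci)) (RtoC (3 * sqrt (t - t0)))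
   (RtoC ((t - t0) * sqrt (t - t0))) f.
Proof. reflexivity. Qed.

Lemma S_LamJ t0 t j f : Sm f -> Sm (LamJ t0 t j f).
Proof. intros. unfold LamJ. destruct (Nat.eqb j 1); [rewrite Lam1_FO|rewrite Lam2_FO]; sm. Qed.
#[export] Hint Resolve S_LamJ : sm.

Lemma Mop_LamJ t0 t j f : Sm f -> Mop t0 t (LamJ t0 t j f) = LamJ t0 t j (Mop t0 t f).
Proof.
  intros. unfold LamJ. destruct (Nat.eqb j 1); rewrite ?Lam1_FO, ?Lam2_FO; apply Mop_FO; auto.
Qed.

Lemma S_applyLam t0 t w f : Sm f -> Sm (applyLam t0 t w f).
Proof. intros. induction w; simpl; sm. Qed.
#[export] Hint Resolve S_applyLam : sm.

Lemma Mop_applyLam t0 t w f : Sm f -> Mop t0 t (applyLam t0 t w f) = applyLam t0 t w (Mop t0 t f).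
Proof.
  intros Hf. induction w as [|j w IH]; simpl. reflexivity.
  rewrite Mop_LamJ by sm. rewrite IH. reflexivity.
Qed.

Lemma S_iter t0 t p f : Sm f -> Sm (Nat.iter p (Mop t0 t) f).
Proof. intros. induction p; simpl; sm. Qed.
#[export] Hint Resolve S_iter : sm.

Definition Q2 (h : state -> C) : Prop :=
  Dx h /\ Dv h /\ Dx (pdv1 h) /\ Dv (pdv1 h) /\ Dx (pdx1 h).

Lemma Q2_S f : Sm f -> Q2 f.
Proof. intros. unfold Q2; split; [|split; [|split; [|split]]]; sm. Qed.

Lemma Q2_add f g : Q2 f -> Q2 g -> Q2 (fadd f g).
Proof.
  intros (?&?&?&?&?) (?&?&?&?&?).
  unfold Q2; split; [|split; [|split; [|split]]]; rewrite ?pdv1_add, ?pdx1_add by assumption; sm.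
Qed.

Lemma Q2_scale c f : Q2 f -> Q2 (cscale c f).
Proof.
  intros (?&?&?&?&?).
  unfold Q2; split; [|split; [|split; [|split]]]; rewrite ?pdv1_scale, ?pdx1_scale by assumption; sm.
Qed.

Lemma Q2_zero : Q2 (fun _ => RtoC 0).
Proof. unfold Q2; split; [|split; [|split; [|split]]]; rewrite ?pdv1_zero, ?pdx1_zero; sm. Qed.

Lemma Q2_mul f g : Sm f -> Sm g -> Q2 (fmul f g).
Proof.
  intros Hf Hg.
  unfold Q2; split; [|split; [|split; [|split]]]; rewrite ?pdv1_mul, ?pdx1_mul by sm; sm.
Qed.

Lemma Mop_add t0 t f g : Q2 f -> Q2 g -> Mop t0 t (fadd f g) = fadd (Mop t0 t f) (Mop t0 t g).
Proof.
  intros (?&?&?&?&?) (?&?&?&?&?). unfold Mop.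
  repeat first [rewrite pdv1_add by assumption | rewrite pdx1_add by assumption].
  extensionality z. unfold fadd, cscale. ring.
Qed.

Lemma Mop_scale t0 t c f : Q2 f -> Mop t0 t (cscale c f) = cscale c (Mop t0 t f).
Proof.
  intros (?&?&?&?&?). unfold Mop.
  repeat first [rewrite pdv1_scale by assumption | rewrite pdx1_scale by assumption].
  extensionality z. unfold fadd, cscale. ring.
Qed.

Lemma Mop_zero t0 t : Mop t0 t (fun _ => RtoC 0) = (fun _ => RtoC 0).
Proof.
  unfold Mop. rewrite !pdv1_zero, !pdx1_zero. extensionality z. unfold fadd, cscale. ring.
Qed.

Definition fsum {X : Type} (L : list X) (H : X -> state -> C) : state -> C :=
  fun z => Csum (map (fun x => H x z) L).

Lemma fsum_cons {X} (a : X) L H : fsum (a :: L) H = fadd (H a) (fsum L H).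
Proof. reflexivity. Qed.
Lemma fsum_nil {X} H : fsum (@nil X) H = (fun _ => RtoC 0).
Proof. reflexivity. Qed.

Lemma Q2_fsum {X} (L : list X) H : (forall x, Q2 (H x)) -> Q2 (fsum L H).
Proof.
  intros HQ. induction L. rewrite fsum_nil. apply Q2_zero.
  rewrite fsum_cons. apply Q2_add; auto.
Qed.

Lemma Mop_fsum t0 t {X} (L : list X) H : (forall x, Q2 (H x)) ->
  Mop t0 t (fsum L H) = fsum L (fun x => Mop t0 t (H x)).
Proof.
  intros HQ. induction L. rewrite !fsum_nil. apply Mop_zero.
  rewrite !fsum_cons. rewrite Mop_add; auto. rewrite IHL. reflexivity. apply Q2_fsum; auto.
Qed.


Lemma kk1 (u v : C) : Cmult (Cmult (Cinv (Cmult (RtoC 2) Ci)) u) (Cmult (Cinv (Cmult (RtoC 2) Ci)) v)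
  = Cmult (Copp (Cinv (RtoC 4))) (Cmult u v).
Proof.
  transitivity (Cmult (Cmult (Cinv (Cmult (RtoC 2) Ci)) (Cinv (Cmult (RtoC 2) Ci))) (Cmult u v)). ring.
  f_equal. unfold Cinv, Cmult, Ci, RtoC, Copp. simpl. apply injective_projections; simpl; field.
Qed.

Lemma kk2 (u v : C) : Cmult (Cmult (Cdiv (RtoC (sqrt 3)) (Cmult (RtoC 6) Ci)) u)
                             (Cmult (Cdiv (RtoC (sqrt 3)) (Cmult (RtoC 6) Ci)) v)
  = Cmult (Copp (Cinv (RtoC 12))) (Cmult u v).
Proof.
  unfold Cdiv.
  transitivity (Cmult (Cmult (Cmult (RtoC (sqrt 3)) (RtoC (sqrt 3)))
      (Cmult (Cinv (Cmult (RtoC 6) Ci)) (Cinv (Cmult (RtoC 6) Ci)))) (Cmult u v)). ring.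
  f_equal. rewrite <- RtoC_mult, sqrt_sqrt by lra.
  unfold Cinv, Cmult, Ci, RtoC, Copp. simpl. apply injective_projections; simpl; field.
Qed.


Lemma scal_lemmas t0 t : 0 <= t - t0 ->
  let A := RtoC (sqrt (t - t0)) in
  RtoC (- (t - t0)) = Copp (Cmult A A) /\
  RtoC (- (t - t0) ^ 2) = Copp (Cmult (Cmult A A) (Cmult A A)) /\
  RtoC (- ((t - t0) ^ 3 / 3)) = Cmult (Copp (Cmult (Cmult (Cmult A A) (Cmult A A)) (Cmult A A))) (Cinv (RtoC 3)) /\
  RtoC ((t - t0) * sqrt (t - t0)) = Cmult (Cmult A A) A /\
  RtoC (3 * sqrt (t - t0)) = Cmult (RtoC 3) A.
Proof.
  intros Hs A. unfold A. pose proof (sqrt_sqrt (t - t0) Hs) as Hr.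
  set (r := sqrt (t - t0)) in *. rewrite <- Hr.
  unfold Cinv, Cmult, RtoC, Copp. simpl.
  repeat split; apply injective_projections; simpl; field.
Qed.

Lemma Mop_fmul t0 t F G : 0 <= t - t0 -> Sm F -> Sm G ->
  Mop t0 t (fmul F G) = fun z =>
    Cplus (Cplus (Cmult (Mop t0 t F z) (G z)) (Cmult (F z) (Mop t0 t G z)))
      (Cplus (Cplus (Cmult (Lam1 t0 t F z) (Lam1 t0 t G z)) (Cmult (Lam2 t0 t F z) (Lam2 t0 t G z)))
             (Cplus (Cmult (Lam1 t0 t F z) (Lam1 t0 t G z)) (Cmult (Lam2 t0 t F z) (Lam2 t0 t G z)))).
Proof.
  intros Hs HF HG. unfold Mop at 1.
  repeat first [rewrite pdv1_mul by sm | rewrite pdx1_mul by sm | rewrite pdv1_add by sm | rewrite pdx1_add by sm].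
  extensionality z. unfold Mop, Lam1, Lam2, fadd, fmul, cscale.
  rewrite !kk1, !kk2.
  destruct (scal_lemmas t0 t Hs) as (E1 & E2 & E3 & E4 & E5).
  rewrite E1, E2, E3, E4, E5.
  field.
Qed.


Lemma Csum_map_plus {X} (f g : X -> C) L :
  Csum (map (fun x => Cplus (f x) (g x)) L) = Cplus (Csum (map f L)) (Csum (map g L)).
Proof. induction L; simpl. ring. rewrite IHL. ring. Qed.

Lemma LamDot_fsum t0 t l F G :
  LamDot t0 t l F G = fsum (words l) (fun w => fmul (applyLam t0 t w F) (applyLam t0 t w G)).
Proof. reflexivity. Qed.

Lemma LamDot_S t0 t l F G z :
  LamDot t0 t (S l) F G z = Csum (map (fun w =>
     Cplus (Cmult (Lam1 t0 t (applyLam t0 t w F) z) (Lam1 t0 t (applyLam t0 t w G) z))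
           (Cmult (Lam2 t0 t (applyLam t0 t w F) z) (Lam2 t0 t (applyLam t0 t w G) z))) (words l)).
Proof.
  unfold LamDot. simpl words. rewrite map_flat_map'.
  change (Csum (flat_map ?f ?L)) with (fold_right Cplus (RtoC 0) (flat_map f L)).
  rewrite fold_flat_map_C. apply Csum_map_ext. intros w _. simpl. unfold LamJ. simpl. ring.
Qed.

Lemma Mop_LamDot t0 t l F G z : 0 <= t - t0 -> Sm F -> Sm G ->
  Mop t0 t (LamDot t0 t l F G) z =
  Cplus (Cplus (LamDot t0 t l (Mop t0 t F) G z) (LamDot t0 t l F (Mop t0 t G) z))
        (Cplus (LamDot t0 t (S l) F G z) (LamDot t0 t (S l) F G z)).
Proof.
  intros Hs HF HG. rewrite (LamDot_fsum t0 t l F G).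
  rewrite Mop_fsum by (intros; apply Q2_mul; sm).
  rewrite LamDot_S. unfold fsum, LamDot.
  rewrite <- !Csum_map_plus. apply Csum_map_ext. intros w _.
  rewrite Mop_fmul by sm. rewrite !Mop_applyLam by sm. reflexivity.
Qed.

Definition RHS t0 t g h k N : state -> C := fun z =>
  tsum N (fun l p q => Cmult (T k l p q)
     (LamDot t0 t l (Nat.iter p (Mop t0 t) g) (Nat.iter q (Mop t0 t) h) z)).

Lemma RHS_fsum t0 t g h k N : RHS t0 t g h k N =
  fsum (seq 0 N) (fun l => fsum (seq 0 N) (fun p => fsum (seq 0 N) (fun q =>
    cscale (T k l p q) (LamDot t0 t l (Nat.iter p (Mop t0 t) g) (Nat.iter q (Mop t0 t) h))))).
Proof. reflexivity. Qed.

Lemma Q2_LamDot t0 t l F G : Sm F -> Sm G -> Q2 (LamDot t0 t l F G).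
Proof. intros. rewrite LamDot_fsum. apply Q2_fsum. intros; apply Q2_mul; sm. Qed.

Lemma Mop_fsum3 t0 t {X} (L : list X) (H : X -> X -> X -> state -> C) :
  (forall a b c, Q2 (H a b c)) ->
  Mop t0 t (fsum L (fun a => fsum L (fun b => fsum L (fun c => H a b c)))) =
  fsum L (fun a => fsum L (fun b => fsum L (fun c => Mop t0 t (H a b c)))).
Proof.
  intros HQ. rewrite Mop_fsum by (intros; apply Q2_fsum; intros; apply Q2_fsum; auto).
  f_equal. extensionality a.
  rewrite Mop_fsum by (intros; apply Q2_fsum; auto).
  f_equal. extensionality b.
  rewrite Mop_fsum by auto. reflexivity.
Qed.

Lemma main_formula t0 t g h : 0 <= t - t0 -> Sm g -> Sm h -> forall k N, (S k <= N)%nat ->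
  Nat.iter k (Mop t0 t) (fmul g h) = RHS t0 t g h k N.
Proof.
  intros Hs Hg Hh k. induction k as [|k IH]; intros N HN.
  - extensionality z. unfold RHS.
    rewrite (tsum_T_extend 0 N) by lia.
    unfold tsum, sumN, T, LamDot. simpl. unfold fmul. ring.
  - change (Nat.iter (S k) (Mop t0 t) (fmul g h)) with (Mop t0 t (Nat.iter k (Mop t0 t) (fmul g h))).
    rewrite (IH N) by lia. rewrite (RHS_fsum t0 t g h k N).
    rewrite Mop_fsum3 by (intros; apply Q2_scale, Q2_LamDot; sm).
    extensionality z. unfold RHS. rewrite tsum_step by lia.
    unfold fsum. change (Csum (map ?f (seq 0 N))) with (sumN N f).
    apply sumN_ext. intros l _. apply sumN_ext. intros p _. apply sumN_ext. intros q _.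
    rewrite Mop_scale by (apply Q2_LamDot; sm). unfold cscale.
    rewrite Mop_LamDot by sm. reflexivity.
Qed.

Theorem lemma4p2 (t0 t : R) (Ht0 : 0 < t0 <= 1 / 2) (Ht : t0 <= t <= 1) :
  coef 0 0 0 0 0 = 1%nat /\
  (forall k j : nat, (j <= 2 * k)%nat ->
     INR (sum_lpq Nat.add 0%nat k j (fun l p q => coef k j l p q))
       = Binomial.C (2 * k) j) /\
  (forall (k : nat) (g h : state -> C),
     smoothC g -> smoothC h -> periodic_x g -> periodic_x h ->
     forall z : state,
       Nat.iter k (Mop t0 t) (fmul g h) z
       = Csum (map (fun j => Aterm t0 t k j g h z) (seq 0 (S (2 * k))))).
Proof.
  split; [reflexivity|split].
  - apply binom_part.
  - intros k g h Hg Hh _ _ z.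
    rewrite (main_formula t0 t g h ltac:(lra) Hg Hh k (S k) ltac:(lia)).
    unfold RHS. symmetry.
    apply (Aterm_conv k (fun l p q => LamDot t0 t l (Nat.iter p (Mop t0 t) g) (Nat.iter q (Mop t0 t) h) z)).
Qed.
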